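(* Let $S_{r,N}$ be a nontrivial atomic exponential Puiseux semiring. Then $$\{|\mathsf{n}(r)^{\delta_n}-\mathsf{d}(r)^{\delta_n}|: n\in\mathbb{N}\}\subseteq\Delta(S_{r,N})\subseteq\{k\in\mathbb{Z}: |\mathsf{n}(r)-\mathsf{d}(r)|\le k\le|\mathsf{n}(r)^{\delta_0}-\mathsf{d}(r)^{\delta_0}|\}.$$
   Context: $\mathbb{N}=\{0,1,2,\dots\}$. A numerical monoid $N$ is an additive submonoid of $\mathbb{N}$ with finite complement in $\mathbb{N}$; let $s_0<s_1<\cdots$ be its elements and $\delta_n=s_{n+1}-s_n$. For $r\in\mathbb{Q}_{>0}$ write $r=\mathsf{n}(r)/\mathsf{d}(r)$ in lowest terms. The exponential Puiseux semiring $S_{r,N}$ is the additive submonoid of $\mathbb{Q}_{\ge0}$ generated by $\{r^k:k\in N\}$; it is nontrivial if $r\notin\mathbb{N}$, and then atomic iff $\mathsf{n}(r)>1$. For an atomic monoid $M$ and $x\in M$ with set of lengths $\mathsf{L}(x)$, a positive integer $d$ is a distance of $x$ if $\mathsf{L}(x)\cap\{l,\dots,l+d\}=\{l,l+d\}$ for some $l\in\mathsf{L}(x)$; $\Delta(x)$ is the set of distances of $x$ and $\Delta(M)=\bigcup_{x\in M}\Delta(x)$. *)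

(* Defs.v *)
From HB Require Import structures.
From mathcomp Require Import all_boot all_order all_algebra.
Set Implicit Arguments. Unset Strict Implicit. Unset Printing Implicit Defensive.
Import Order.TTheory GRing.Theory Num.Theory.
Local Open Scope ring_scope.

Definition numerical_monoid (N : nat -> Prop) : Prop :=
  N 0%N /\ (forall a b, N a -> N b -> N (a + b)%N) /\
  exists b : nat, forall m, (b <= m)%N -> N m.

Definition enumerates (N : nat -> Prop) (s : nat -> nat) : Prop :=
  (forall n, (s n < s n.+1)%N) /\ (forall m, N m <-> exists n, s n = m).

Definition exp_puiseux (r : rat) (N : nat -> Prop) (x : rat) : Prop :=
  exists ks : seq nat, (forall k, k \in ks -> N k) /\ x = \sum_(k <- ks) r ^+ k.

(* Atoms of a submonoid M of (Q,+) (its only unit is 0). *)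
Definition is_atom (M : rat -> Prop) (a : rat) : Prop :=
  M a /\ a != 0 /\
  forall u v, M u -> M v -> a = u + v -> u = 0 \/ v = 0.

Definition atomic (M : rat -> Prop) : Prop :=
  forall x, M x -> x != 0 ->
    exists s : seq rat, (forall a, a \in s -> is_atom M a) /\ x = \sum_(a <- s) a.

Definition in_lengths (M : rat -> Prop) (x : rat) (l : nat) : Prop :=
  exists s : seq rat, size s = l /\ (forall a, a \in s -> is_atom M a) /\
                      x = \sum_(a <- s) a.

Definition is_distance (M : rat -> Prop) (x : rat) (d : nat) : Prop :=
  (0 < d)%N /\ exists l, in_lengths M x l /\ in_lengths M x (l + d) /\
    forall l', (l < l')%N -> (l' < l + d)%N -> ~ in_lengths M x l'.

Definition delta_set (M : rat -> Prop) (d : nat) : Prop :=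
  exists x, M x /\ is_distance M x d.

(* Main.v *)
Require Import Defs.
From HB Require Import structures.
From mathcomp Require Import all_boot all_order all_algebra.
From mathcomp Require Import zify ring.
From Stdlib Require Import Classical.
Import Order.TTheory GRing.Theory Num.Theory.
Local Open Scope ring_scope.
Set Implicit Arguments. Unset Strict Implicit.

Section Basic.
Variables (r : rat) (p q : nat).
Hypothesis hr : r = p%:R / q%:R.
Hypothesis hp : (0 < p)%N.
Hypothesis hq : (0 < q)%N.
Hypothesis cop : coprime p q.

Definition vsum (ks : seq nat) : rat := \sum_(k <- ks) r ^+ k.
Definition nv (E : nat) (ks : seq nat) : nat := (\sum_(k <- ks) p ^ k * q ^ (E - k))%N.

Lemma val_nil : vsum [::] = 0. Proof. by rewrite /vsum big_nil. Qed.
Lemma val_cons k ks : vsum (k :: ks) = r ^+ k + vsum ks.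
Proof. by rewrite /vsum big_cons. Qed.
Lemma val_cat s1 s2 : vsum (s1 ++ s2) = vsum s1 + vsum s2.
Proof. by rewrite /vsum big_cat. Qed.
Lemma val_nseq m k : vsum (nseq m k) = m%:R * r ^+ k.
Proof.
elim: m => [|m IH]; first by rewrite val_nil mul0r.
by rewrite /= val_cons IH mulrSr mulrDl mul1r addrC.
Qed.
Lemma val_perm s1 s2 : perm_eq s1 s2 -> vsum s1 = vsum s2.
Proof. by move=> h; rewrite /vsum (perm_big _ h). Qed.

Lemma r_gt0 : 0 < r.
Proof. by rewrite hr divr_gt0 // ltr0n. Qed.

Lemma val_ge0 ks : 0 <= vsum ks.
Proof.
elim: ks => [|k ks IH]; first by rewrite val_nil.
by rewrite val_cons addr_ge0 // exprn_ge0 // ltW // r_gt0.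
Qed.

Lemma val_gt0 ks : ks != [::] -> 0 < vsum ks.
Proof.
case: ks => [//|k ks] _.
by rewrite val_cons ltr_pwDl ?val_ge0 // exprn_gt0 // r_gt0.
Qed.

Lemma rpowE k : r ^+ k = (p ^ k)%:R / (q ^ k)%:R.
Proof. by rewrite hr exprMn exprVn !natrX. Qed.

Lemma val_nv E ks : (forall k, k \in ks -> k <= E)%N ->
  vsum ks * (q ^ E)%:R = (nv E ks)%:R.
Proof.
elim: ks => [|k ks IH] h; first by rewrite val_nil mul0r /nv big_nil.
rewrite val_cons /nv big_cons natrD mulrDl -/(nv E ks) IH; last first.
  by move=> j hj; apply: h; rewrite inE hj orbT.
congr (_ + _).
have hk : (k <= E)%N by apply: h; rewrite inE eqxx.
rewrite rpowE -(subnKC hk) expnD natrM addKn mulrA natrM.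
by rewrite divfK // pnatr_eq0 -lt0n expn_gt0 hq.
Qed.

Lemma nv_dvd_low E ks c : (forall k, k \in ks -> c <= k)%N -> (p ^ c %| nv E ks)%N.
Proof.
move=> h; rewrite /nv big_seq; apply: dvdn_sum => k hk.
by apply: dvdn_mulr; rewrite dvdn_exp2l // h.
Qed.

Lemma nv_dvd_high E ks c : (forall k, k \in ks -> k <= c)%N -> (q ^ (E - c) %| nv E ks)%N.
Proof.
move=> h; rewrite /nv big_seq; apply: dvdn_sum => k hk.
apply: dvdn_mull; rewrite dvdn_exp2l //; have := h k hk; lia.
Qed.

Lemma nv_gt0 E ks : ks != [::] -> (0 < nv E ks)%N.
Proof.
case: ks => [//|k ks] _; rewrite /nv big_cons.
by rewrite ltn_addr // muln_gt0 !expn_gt0 hp hq.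
Qed.


Lemma val_count j ks :
  vsum ks = (count_mem j ks)%:R * r ^+ j + vsum (filter (predC1 j) ks).
Proof.
elim: ks => [|k ks IH]; first by rewrite val_nil mul0r add0r.
rewrite val_cons /= IH; case: (eqVneq k j) => [->|hkj] /=.
  by rewrite add1n mulrSr mulrDl mul1r addrCA addrA.
by rewrite add0n val_cons addrCA.
Qed.

Lemma val_split (P : pred nat) ks :
  vsum ks = vsum (filter P ks) + vsum (filter (predC P) ks).
Proof.
elim: ks => [|k ks IH]; first by rewrite /= val_nil addr0.
rewrite val_cons IH /=; case: (P k) => /=; rewrite val_cons.
  by rewrite addrA.
by rewrite addrCA.
Qed.

Lemma val_ge_size c ks : (forall k, k \in ks -> c <= r ^+ k) ->
  (size ks)%:R * c <= vsum ks.
Proof.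
elim: ks => [|k ks IH] h; first by rewrite val_nil mul0r.
rewrite val_cons /= -addn1 natrD mulrDl mul1r addrC lerD //.
  by apply: h; rewrite inE eqxx.
by apply: IH => j hj; apply: h; rewrite inE hj orbT.
Qed.

Lemma val_le_size c ks : (forall k, k \in ks -> r ^+ k <= c) ->
  vsum ks <= (size ks)%:R * c.
Proof.
elim: ks => [|k ks IH] h; first by rewrite val_nil mul0r.
rewrite val_cons /= -addn1 natrD mulrDl mul1r addrC lerD //.
  by apply: IH => j hj; apply: h; rewrite inE hj orbT.
by apply: h; rewrite inE eqxx.
Qed.

End Basic.

Lemma count_mem_filter (P : pred nat) x (s : seq nat) :
  count_mem x (filter P s) = if P x then count_mem x s else 0%N.
Proof.
elim: s => [|k s IH] /=; first by case: (P x).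
case: (eqVneq k x) => [->|hkx].
  case hP: (P x) => /=; rewrite IH hP //=.
  by rewrite eqxx.
case: (P k) => /=; rewrite ?(negbTE hkx) /= ?IH //.
Qed.

Lemma perm_filter_count (P : pred nat) (s1 s2 : seq nat) :
  (forall x, P x -> count_mem x s1 = count_mem x s2) ->
  perm_eq (filter P s1) (filter P s2).
Proof.
move=> h; rewrite /perm_eq; apply/allP => x _ /=.
rewrite !count_mem_filter; case hx: (P x) => //.
by rewrite h.
Qed.

Lemma extract (j m : nat) (ks : seq nat) : (m <= count_mem j ks)%N ->
  exists rest, perm_eq ks (nseq m j ++ rest).
Proof.
elim: m ks => [|m IH] ks h; first by exists ks.
have hj : j \in ks by rewrite -has_pred1 has_count; lia.
have hp := perm_to_rem hj.
have : (m <= count_mem j (rem j ks))%N.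
  move: h; rewrite (permP hp) /= eqxx; lia.
case/IH => rest hr; exists rest.
apply: (perm_trans hp) => /=; by rewrite perm_cons.
Qed.

Lemma canc (P Q a1 a2 S1 S2 : nat) : coprime P Q ->
  (a1 * Q + S1 = a2 * Q + S2)%N -> (P %| S1)%N -> (P %| S2)%N ->
  (a1 < P)%N -> (a2 < P)%N -> a1 = a2.
Proof.
move=> cPQ e /dvdnP [x1 e1] /dvdnP [x2 e2] h1 h2; subst S1 S2.
wlog le12 : a1 a2 x1 x2 e h1 h2 / (a1 <= a2)%N.
  move=> W; have [h|h] := boolP (a1 <= a2)%N.
  exact: (W a1 a2 x1 x2 e h1 h2 h).
  symmetry; apply: (W a2 a1 x2 x1) => //; lia.
have hd : (P %| (a2 - a1) * Q)%N.
  apply/dvdnP; exists (x1 - x2)%N; rewrite mulnBl mulnBl; lia.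
rewrite Gauss_dvdl // in hd.
have : (a2 - a1 < P)%N by lia.
case: (posnP (a2 - a1)) => [h0|hpos]; first lia.
have := dvdn_leq hpos hd; lia.
Qed.

Section Enum.
Variables (N : nat -> Prop) (s : nat -> nat).
Hypothesis hN : numerical_monoid N.
Hypothesis hs : enumerates N s.

Lemma s_lt i j : (i < j)%N -> (s i < s j)%N.
Proof.
case: hs => inc _.
elim: j => [//|j IH]; rewrite ltnS leq_eqVlt => /orP [/eqP ->|h].
  exact: inc.
exact: ltn_trans (IH h) (inc j).
Qed.

Lemma s_ltE i j : (s i < s j)%N = (i < j)%N.
Proof.
case: (ltnP i j) => h; first by rewrite s_lt.
apply/negbTE; rewrite -leqNgt; case: (eqVneq i j) => [->//|hne].
by apply: ltnW; apply: s_lt; rewrite ltn_neqAle eq_sym hne h.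
Qed.

Lemma s_leE i j : (s i <= s j)%N = (i <= j)%N.
Proof. by rewrite leqNgt s_ltE -leqNgt. Qed.

Lemma Ns i : N (s i).
Proof. by case: hs => _ h; apply/h; exists i. Qed.

Lemma s0 : s 0 = 0%N.
Proof.
case: hs => _ h; case: hN => N0 _.
have [t ht] := (h 0%N).1 N0.
have := s_leE 0 t; rewrite leq0n ht; lia.
Qed.

Lemma N_s k : N k -> exists i, s i = k.
Proof. by case: hs => _ h /h. Qed.

Lemma N_above k i : N k -> (s i < k)%N -> (s i.+1 <= k)%N.
Proof.
case/N_s => t <-; rewrite s_ltE => h; by rewrite s_leE.
Qed.

Lemma N_below k i : N k -> (k < s i.+1)%N -> (k <= s i)%N.
Proof.
move=> hk h; rewrite leqNgt; apply/negP => h2.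
by have := @N_above k i hk h2; rewrite leqNgt h.
Qed.

Lemma N_pos k : N k -> (0 < k)%N -> exists i, k = s i.+1.
Proof.
case/N_s => [[|i]] <-; first by rewrite s0.
by exists i.
Qed.

Lemma delta_pos i : (0 < s i.+1 - s i)%N.
Proof. by rewrite subn_gt0 s_ltE. Qed.

Lemma delta_le i : (s i.+1 - s i <= s 1%N)%N.
Proof.
case: hN => _ [hadd _].
have h1 : N (s i + s 1)%N by apply: hadd; apply: Ns.
have h2 : (s i < s i + s 1)%N.
  have := @s_lt 0 1 (ltn0Sn 0); rewrite s0; lia.
have := @N_above _ i h1 h2; lia.
Qed.

End Enum.

Lemma bound_exists (ks : seq nat) : exists E, forall k, k \in ks -> (k <= E)%N.
Proof.
elim: ks => [|k ks [E hE]]; first by exists 0%N.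
exists (maxn k E) => j; rewrite inE => /orP [/eqP ->|/hE h].
  exact: leq_maxl.
exact: leq_trans h (leq_maxr _ _).
Qed.

Lemma exp_mono (m n e : nat) : (m <= n)%N -> (m ^ e <= n ^ e)%N.
Proof. by move=> h; case: e => [|e] //; rewrite leq_exp2r. Qed.

Lemma diff_mono (P Q a b : nat) : (Q <= P)%N -> (a <= b)%N -> (P ^ a - Q ^ a <= P ^ b - Q ^ b)%N.
Proof.
move=> hQP hab; rewrite -(subnKC hab) !expnD.
move: (b - a)%N => c.
have h1 : (Q ^ c <= P ^ c)%N by apply: exp_mono.
have h2 : (Q ^ a <= P ^ a)%N by apply: exp_mono.
case: (posnP P) => hP0.
  have hQ0 : Q = 0%N by lia.
  by rewrite hP0 hQ0 subnn.
have h3 : (1 <= P ^ c)%N by rewrite expn_gt0 hP0.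
move: h1 h2 h3; move: (P ^ a)%N (Q ^ a)%N (P ^ c)%N (Q ^ c)%N => x y u v; nia.
Qed.

Section Main.
Variables (N : nat -> Prop) (s : nat -> nat).
Hypothesis hN : numerical_monoid N.
Hypothesis hs : enumerates N s.
Variables (r : rat) (p q : nat).
Hypothesis hr : r = p%:R / q%:R.
Hypothesis hp : (1 < p)%N.
Hypothesis hq : (1 < q)%N.
Hypothesis cop : coprime p q.

Let hp0 : (0 < p)%N. Proof. exact: ltnW hp. Qed.
Let hq0 : (0 < q)%N. Proof. exact: ltnW hq. Qed.

Definition inN (ks : seq nat) := forall k, k \in ks -> N k.
Local Notation M := (exp_puiseux r N).
Local Notation vl := (vsum r).

Lemma rgt0 : 0 < r. Proof. exact: r_gt0 hr hp0 hq0. Qed.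

Lemma move_val i : (p ^ (s i.+1 - s i))%:R * r ^+ (s i) =
                   (q ^ (s i.+1 - s i))%:R * r ^+ (s i.+1).
Proof.
have hle : (s i <= s i.+1)%N by rewrite (s_leE hs).
rewrite -{3}(subnKC hle) exprD [r ^+ (_ - _)](rpowE hr).
have hq' : (q ^ (s i.+1 - s i))%:R != 0 :> rat.
  by rewrite pnatr_eq0 -lt0n expn_gt0 hq0.
by field.
Qed.

Lemma r_gt1 : (q < p)%N -> 1 < r.
Proof.
move=> h; rewrite hr ltr_pdivlMr ?ltr0n // mul1r ltr_nat //.
Qed.

Lemma r_lt1 : (p < q)%N -> r < 1.
Proof.
move=> h; rewrite hr ltr_pdivrMr ?ltr0n // mul1r ltr_nat //.
Qed.

Lemma pow_lt1 j k : (p < q)%N -> (j < k)%N -> r ^+ k < r ^+ j.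
Proof.
move=> h hjk; rewrite -(subnKC (ltnW hjk)) exprD.
rewrite gtr_pMr ?exprn_gt0 ?rgt0 // exprn_ilt1 ?ltW ?rgt0 ?r_lt1 //.
by rewrite subn_eq0 -ltnNge.
Qed.

Lemma pow_gt1 j k : (q < p)%N -> (j < k)%N -> r ^+ j < r ^+ k.
Proof. by move=> h hjk; rewrite ltr_eXn2l // r_gt1. Qed.

Lemma p_neq_q : p != q.
Proof.
apply/negP => /eqP e; move: cop; rewrite e /coprime gcdnn => /eqP e1.
by move: hq; rewrite e1.
Qed.

Lemma in_M ks : inN ks -> M (vl ks).
Proof. by move=> h; exists ks. Qed.

Lemma elem_lt ks k j : vl ks = r ^+ k -> j \in ks -> (1 < size ks)%N ->
  r ^+ j < r ^+ k.
Proof.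
move=> e hj hsz; rewrite -e (val_perm r (perm_to_rem hj)) val_cons.
rewrite ltrDl (val_gt0 hr hp0 hq0) //; apply/eqP => h0.
by move: hsz; rewrite (perm_size (perm_to_rem hj)) /= h0.
Qed.

Lemma atom_pow k : N k -> is_atom M (r ^+ k).
Proof.
move=> hk; split.
  exists [:: k]; split; last by rewrite big_cons big_nil addr0.
  by move=> j; rewrite inE => /eqP ->.
split; first by rewrite expf_neq0 // lt0r_neq0 // rgt0.
move=> u v [ks1 [h1 ->]] [ks2 [h2 ->]] e.
case: (eqVneq ks1 [::]) => [->|n1]; first by left; rewrite big_nil.
case: (eqVneq ks2 [::]) => [->|n2]; first by right; rewrite big_nil.
exfalso.
have e' : vl (ks1 ++ ks2) = r ^+ k by rewrite val_cat.
have hsz : (1 < size (ks1 ++ ks2))%N.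
  rewrite size_cat; move: n1 n2; rewrite -!size_eq0 -!lt0n.
  by move=> a b; exact: (leq_add a b).
have hlt : forall j, j \in ks1 ++ ks2 -> r ^+ j < r ^+ k.
  by move=> j hj; exact: elem_lt e' hj hsz.
have nn : ks1 ++ ks2 != [::] by rewrite -size_eq0 -lt0n ltnW.
case: (ltngtP p q) => hpq; last by move: p_neq_q; rewrite hpq eqxx.
-
  have hgt : forall j, j \in ks1 ++ ks2 -> (k.+1 <= j)%N.
    move=> j hj; have := hlt j hj; rewrite ltnNge; apply: contraTN => hjk.
    rewrite -leNgt; case: (ltngtP j k) hjk => // hjk _.
    + exact: ltW (pow_lt1 hpq hjk).
    + by rewrite hjk.
  have [E hE] := bound_exists (ks1 ++ ks2).
  have hkE : (k <= E)%N.
    move: nn; case: (ks1 ++ ks2) hgt hE => // j ss hg hE' _.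
    have := hg j (mem_head _ _); have := hE' j (mem_head _ _); lia.
  have hv := val_nv hr hq0 hE; rewrite e' in hv.
  have hv2 : r ^+ k * (q ^ E)%:R = (p ^ k * q ^ (E - k))%:R.
    rewrite (rpowE hr) -(subnKC hkE) expnD natrM addKn mulrA divfK //.
    by rewrite natrM. by rewrite pnatr_eq0 -lt0n expn_gt0 hq0.
  rewrite hv2 in hv; move/eqP: hv; rewrite eqr_nat => /eqP hv.
  have hd := (@nv_dvd_low p q E _ _ hgt); rewrite -hv expnS in hd.
  rewrite mulnC dvdn_pmul2l ?expn_gt0 ?hp0 // in hd.
  have : coprime p (q ^ (E - k)) by rewrite coprimeXr.
  rewrite /coprime => /eqP hg.
  by rewrite (gcdn_idPl hd) in hg; move: hp; rewrite hg.
-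
  have hlt' : forall j, j \in ks1 ++ ks2 -> (j <= k.-1)%N.
    move=> j hj; have := hlt j hj; apply: contraTT; rewrite -ltnNge => hjk.
    rewrite -leNgt; case: (ltngtP j k) => hjk2.
    + lia.
    + exact: ltW (pow_gt1 hpq hjk2).
    + by rewrite hjk2.
  have hk0 : (0 < k)%N.
    move: nn; case: (ks1 ++ ks2) hlt => // j ss hl _.
    have := hl j (mem_head _ _); rewrite ltNge; apply: contraNT.
    rewrite -eqn0Ngt => /eqP ->; rewrite expr0 -(expr0 r).
    by rewrite ler_weXn2l // ltW // r_gt1.
  have hk' : forall j, j \in ks1 ++ ks2 -> (j <= k)%N.
    by move=> j /hlt' h; lia.
  have hv := val_nv hr hq0 hk'; rewrite e' in hv.
  have hv2 : r ^+ k * (q ^ k)%:R = (p ^ k)%:R.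
    by rewrite (rpowE hr) divfK // pnatr_eq0 -lt0n expn_gt0 hq0.
  rewrite hv2 in hv; move/eqP: hv; rewrite eqr_nat => /eqP hv.
  have hd := (nv_dvd_high hp0 hq0 cop k hlt'); rewrite -hv in hd.
  have e1 : (k - k.-1 = 1)%N by lia.
  rewrite e1 expn1 in hd.
  have : coprime q (p ^ k) by rewrite coprimeXr // coprime_sym.
  rewrite /coprime => /eqP hg.
  by rewrite (gcdn_idPl hd) in hg; move: hq; rewrite hg.
Qed.

Lemma atom_inv a : is_atom M a -> exists k, N k /\ a = r ^+ k.
Proof.
case=> [[ks [hks ->]] [hne hsp]].
case: ks hks hne hsp => [|k ks] hks hne hsp; first by rewrite big_nil eqxx in hne.
have hk : N k by apply: hks; rewrite inE eqxx.
case: (eqVneq ks [::]) => [->|nks].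
  by exists k; split => //; rewrite big_cons big_nil addr0.
exfalso.
have hks' : inN ks by move=> j hj; apply: hks; rewrite inE hj orbT.
have hu : M (r ^+ k).
  by exists [:: k]; split; [move=> j; rewrite inE => /eqP -> | rewrite big_cons big_nil addr0].
have he : \sum_(k0 <- k :: ks) r ^+ k0 = r ^+ k + vl ks by rewrite big_cons.
case: (hsp _ _ hu (in_M hks') he) => /eqP.
  by apply/negP; rewrite expf_neq0 // lt0r_neq0 // rgt0.
by apply/negP; rewrite lt0r_neq0 // (val_gt0 hr hp0 hq0).
Qed.

Lemma len_to x l : in_lengths M x l -> exists ks, inN ks /\ size ks = l /\ x = vl ks.
Proof.
case=> sa [<- [ha ->]] {l}.
elim: sa ha => [|a sa IH] ha.
  exists [::]; split; first by [].
  by split; [ | rewrite big_nil /vsum big_nil].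
have [k [hk ->]] := atom_inv (ha a (mem_head _ _)).
have [ks [hks [hsz he]]] : exists ks, inN ks /\ size ks = size sa /\ \sum_(a <- sa) a = vl ks.
  by apply: IH => b hb; apply: ha; rewrite inE hb orbT.
exists (k :: ks); split; first by move=> j; rewrite inE => /orP [/eqP ->|/hks].
by rewrite /= hsz big_cons he (val_cons r).
Qed.

Lemma len_from ks : inN ks -> in_lengths M (vl ks) (size ks).
Proof.
move=> h; exists (map (fun k => r ^+ k) ks); rewrite size_map; split => //; split.
  by move=> a /mapP [k hk ->]; apply: atom_pow; apply: h.
by rewrite big_map.
Qed.

Local Notation dl i := (s i.+1 - s i)%N.

Lemma inN_cat s1 s2 : inN s1 -> inN s2 -> inN (s1 ++ s2).
Proof. by move=> h1 h2 k; rewrite mem_cat => /orP [/h1|/h2]. Qed.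

Lemma inN_nseq m k : N k -> inN (nseq m k).
Proof. by move=> hk j /nseqP [-> _]. Qed.

Lemma inN_perm s1 s2 : perm_eq s1 s2 -> inN s1 -> inN s2.
Proof. by move=> hpe h k; rewrite -(perm_mem hpe) => /h. Qed.

Lemma move_down i ks : inN ks -> (p ^ dl i <= count_mem (s i) ks)%N ->
  exists ks2, inN ks2 /\ vl ks2 = vl ks /\ (size ks2 + p ^ dl i = size ks + q ^ dl i)%N.
Proof.
move=> hN1 /extract [rest hpr].
have hrest : inN rest by move=> k hk; apply: hN1; rewrite (perm_mem hpr) mem_cat hk orbT.
exists (nseq (q ^ dl i) (s i.+1) ++ rest); split.
  by apply: inN_cat => //; apply: inN_nseq; apply: (Ns hs).
rewrite (val_perm r hpr) !(val_cat r) !(val_nseq r) -move_val; split => //.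
rewrite (perm_size hpr) !size_cat !size_nseq.
set z := @size nat rest; lia.
Qed.

Lemma move_up i ks : inN ks -> (q ^ dl i <= count_mem (s i.+1) ks)%N ->
  exists ks2, inN ks2 /\ vl ks2 = vl ks /\ (size ks2 + q ^ dl i = size ks + p ^ dl i)%N.
Proof.
move=> hN1 /extract [rest hpr].
have hrest : inN rest by move=> k hk; apply: hN1; rewrite (perm_mem hpr) mem_cat hk orbT.
exists (nseq (p ^ dl i) (s i) ++ rest); split.
  by apply: inN_cat => //; apply: inN_nseq; apply: (Ns hs).
rewrite (val_perm r hpr) !(val_cat r) !(val_nseq r) move_val; split => //.
rewrite (perm_size hpr) !size_cat !size_nseq.
set z := @size nat rest; lia.
Qed.

Definition canon1 ks := forall i, (count_mem (s i) ks < p ^ dl i)%N.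
Definition canon2 ks := forall i, (count_mem (s i.+1) ks < q ^ dl i)%N.

Lemma reduce1 ks : (q < p)%N -> inN ks -> exists ks', inN ks' /\ vl ks' = vl ks /\
  (size ks' <= size ks)%N /\ canon1 ks'.
Proof.
move=> hpq hks; have [B hB] : exists B, (size ks < B)%N by exists (size ks).+1.
elim: B ks hB hks => [|B IH] ks hB hks; first by rewrite ltn0 in hB.
case: (Classical_Prop.classic (canon1 ks)) => hc.
  by exists ks; split => //; split => //; split.
have [i hi] := Classical_Pred_Type.not_all_ex_not _ _ hc.
have hi' : (p ^ dl i <= count_mem (s i) ks)%N by rewrite leqNgt; apply/negP.
have [ks2 [h2 [e2 sz2]]] := move_down hks hi'.
have hlt : (q ^ dl i < p ^ dl i)%N by rewrite ltn_exp2r ?(delta_pos hs).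
have [ks' [h' [e' [sz' c']]]] : exists ks', inN ks' /\ vl ks' = vl ks2 /\
  (size ks' <= size ks2)%N /\ canon1 ks'.
  by apply: IH => //; lia.
exists ks'; split => //; split; first by rewrite e'.
split => //; lia.
Qed.

Lemma reduce2 ks : (p < q)%N -> inN ks -> exists ks', inN ks' /\ vl ks' = vl ks /\
  (size ks' <= size ks)%N /\ canon2 ks'.
Proof.
move=> hpq hks; have [B hB] : exists B, (size ks < B)%N by exists (size ks).+1.
elim: B ks hB hks => [|B IH] ks hB hks; first by rewrite ltn0 in hB.
case: (Classical_Prop.classic (canon2 ks)) => hc.
  by exists ks; split => //; split => //; split.
have [i hi] := Classical_Pred_Type.not_all_ex_not _ _ hc.
have hi' : (q ^ dl i <= count_mem (s i.+1) ks)%N by rewrite leqNgt; apply/negP.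
have [ks2 [h2 [e2 sz2]]] := move_up hks hi'.
have hlt : (p ^ dl i < q ^ dl i)%N by rewrite ltn_exp2r ?(delta_pos hs).
have [ks' [h' [e' [sz' c']]]] : exists ks', inN ks' /\ vl ks' = vl ks2 /\
  (size ks' <= size ks2)%N /\ canon2 ks'.
  by apply: IH => //; lia.
exists ks'; split => //; split; first by rewrite e'.
split => //; lia.
Qed.

Lemma pow_nv k E : (k <= E)%N -> r ^+ k * (q ^ E)%:R = (p ^ k * q ^ (E - k))%:R.
Proof.
move=> hkE; rewrite (rpowE hr) -(subnKC hkE) expnD natrM addKn mulrA divfK //.
  by rewrite natrM.
by rewrite pnatr_eq0 -lt0n expn_gt0 hq0.
Qed.

Lemma counts_perm (ks1 ks2 : seq nat) : (forall j, count_mem j ks1 = count_mem j ks2) -> perm_eq ks1 ks2.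
Proof. by move=> h; rewrite /perm_eq; apply/allP => x _ /=; rewrite h. Qed.

Lemma count0_notN ks j : inN ks -> ~ N j -> count_mem j ks = 0%N.
Proof. by move=> hks hj; apply/count_memPn; apply/negP => /hks. Qed.

Lemma inN_filter (P : pred nat) ks : inN ks -> inN (filter P ks).
Proof. by move=> h k; rewrite mem_filter => /andP [_ /h]. Qed.

Lemma split_nat j E L : (forall k, k \in L -> k <= E)%N -> (j <= E)%N ->
  vl L * (q ^ E)%:R =
  (count_mem j L * (p ^ j * q ^ (E - j)) + nv p q E (filter (predC1 j) L))%:R.
Proof.
move=> hE hj; rewrite (val_count r j L) mulrDl -mulrA pow_nv // (val_nv hr hq0).
  by rewrite natrD -natrM.
by move=> k; rewrite mem_filter => /andP [_ /hE].
Qed.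

Lemma unique1 ks1 ks2 : (q < p)%N -> inN ks1 -> inN ks2 -> canon1 ks1 -> canon1 ks2 ->
  vl ks1 = vl ks2 -> size ks1 = size ks2.
Proof.
move=> hpq h1 h2 c1 c2 e; apply: perm_size; apply: counts_perm.
elim/ltn_ind => j IH.
pose P := fun k : nat => (j <= k)%N.
have hlow : perm_eq (filter (predC P) ks1) (filter (predC P) ks2).
  by apply: perm_filter_count => x hx; apply: IH; move: hx; rewrite /P /= -ltnNge.
have eL : vl (filter P ks1) = vl (filter P ks2).
  move: e; rewrite (val_split r P ks1) (val_split r P ks2) (val_perm r hlow).
  by move/addIr.
case: (Classical_Prop.classic (N j)) => hj; last by rewrite !count0_notN.
have [t ht] := N_s hs hj.
have hPj : P j by rewrite /P.
have -> : count_mem j ks1 = count_mem j (filter P ks1) by rewrite count_mem_filter hPj.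
have -> : count_mem j ks2 = count_mem j (filter P ks2) by rewrite count_mem_filter hPj.
move: eL (inN_filter (P:=P) h1) (inN_filter (P:=P) h2).
have hL1 : forall k, k \in filter P ks1 -> (j <= k)%N by move=> k; rewrite mem_filter => /andP [].
have hL2 : forall k, k \in filter P ks2 -> (j <= k)%N by move=> k; rewrite mem_filter => /andP [].
have ca1 : (count_mem j (filter P ks1) < p ^ dl t)%N by rewrite count_mem_filter hPj -ht.
have ca2 : (count_mem j (filter P ks2) < p ^ dl t)%N by rewrite count_mem_filter hPj -ht.
move: (filter P ks1) (filter P ks2) hL1 hL2 ca1 ca2 => L1 L2 hL1 hL2 ca1 ca2 eL hN1 hN2.
have [E hE] := bound_exists (j :: L1 ++ L2).
have hjE : (j <= E)%N by apply: hE; rewrite mem_head.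
have hE1 : forall k, k \in L1 -> (k <= E)%N by move=> k hk; apply: hE; rewrite inE mem_cat hk orbT.
have hE2 : forall k, k \in L2 -> (k <= E)%N by move=> k hk; apply: hE; rewrite inE mem_cat hk !orbT.
have hv : (count_mem j L1 * (p ^ j * q ^ (E - j)) + nv p q E (filter (predC1 j) L1) =
          count_mem j L2 * (p ^ j * q ^ (E - j)) + nv p q E (filter (predC1 j) L2))%N.
  apply/eqP; rewrite -(eqr_nat rat) -(split_nat hE1 hjE) -(split_nat hE2 hjE) eL //.
have hR : forall L, (forall k, k \in L -> j <= k)%N -> inN L ->
    (p ^ s t.+1 %| nv p q E (filter (predC1 j) L))%N.
  move=> L hL hNL; apply: nv_dvd_low => k; rewrite mem_filter => /andP [hkj hk].
  apply: (N_above hs (hNL k hk)); rewrite ht ltn_neqAle eq_sym; apply/andP; split; [exact: hkj | exact: hL].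
have hst : (s t.+1 = j + dl t)%N by rewrite -ht subnKC // (s_leE hs).
have [z1 hz1] := dvdnP (hR _ hL1 hN1).
have [z2 hz2] := dvdnP (hR _ hL2 hN2).
rewrite hz1 hz2 hst expnD in hv.
have hv' : ((count_mem j L1 * q ^ (E - j) + z1 * p ^ dl t) * p ^ j =
            (count_mem j L2 * q ^ (E - j) + z2 * p ^ dl t) * p ^ j)%N.
  rewrite !mulnDl; move: hv; set A := (p ^ j)%N; set B := (q ^ (E - j))%N; set C := (p ^ dl t)%N.
  by rewrite -!mulnA (mulnC B A) (mulnC C A).
move/eqP: hv'; rewrite eqn_pmul2r ?expn_gt0 ?hp0 // => /eqP hv'.
apply: (@canc (p ^ dl t)%N _ _ _ _ _ _ hv').
- by rewrite coprimeXr // coprimeXl.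
- exact: dvdn_mull.
- exact: dvdn_mull.
- exact: ca1.
- exact: ca2.
Qed.

Lemma unique2 ks1 ks2 : (p < q)%N -> inN ks1 -> inN ks2 -> canon2 ks1 -> canon2 ks2 ->
  vl ks1 = vl ks2 -> size ks1 = size ks2.
Proof.
move=> hpq h1 h2 c1 c2 e; apply: perm_size; apply: counts_perm.
have [B hB] := bound_exists (ks1 ++ ks2).
suff key : forall t j, (B.+1 - j <= t)%N -> count_mem j ks1 = count_mem j ks2.
  by move=> j; apply: (key (B.+1 - j)%N).
elim=> [|t IHt] j hjt.
  have hnot : forall ks, (forall k, k \in ks -> k <= B)%N -> count_mem j ks = 0%N.
    move=> ks hk; apply/count_memPn; apply/negP => /hk; lia.
  rewrite !hnot // => k hk; apply: hB; rewrite mem_cat hk ?orbT //.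
pose P := fun k : nat => (k <= j)%N.
have hhigh : perm_eq (filter (predC P) ks1) (filter (predC P) ks2).
  apply: perm_filter_count => x hx; apply: IHt; move: hx; rewrite /P /= -ltnNge; lia.
have eL : vl (filter P ks1) = vl (filter P ks2).
  move: e; rewrite (val_split r P ks1) (val_split r P ks2) (val_perm r hhigh).
  by move/addIr.
case: (Classical_Prop.classic (N j)) => hj; last by rewrite !count0_notN.
have hPj : P j by rewrite /P.
have -> : count_mem j ks1 = count_mem j (filter P ks1) by rewrite count_mem_filter hPj.
have -> : count_mem j ks2 = count_mem j (filter P ks2) by rewrite count_mem_filter hPj.
have hL1 : forall k, k \in filter P ks1 -> (k <= j)%N by move=> k; rewrite mem_filter => /andP [].
have hL2 : forall k, k \in filter P ks2 -> (k <= j)%N by move=> k; rewrite mem_filter => /andP [].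
have hcnt : forall ks, canon2 ks -> forall t', s t'.+1 = j ->
    (count_mem j (filter P ks) < q ^ dl t')%N.
  by move=> ks cks t' ht'; rewrite count_mem_filter hPj -ht'.
move: eL (inN_filter (P:=P) h1) (inN_filter (P:=P) h2) (hcnt _ c1) (hcnt _ c2).
move: (filter P ks1) (filter P ks2) hL1 hL2 => L1 L2 hL1 hL2 eL hN1 hN2 ca1 ca2.
have hv : (count_mem j L1 * (p ^ j * q ^ (j - j)) + nv p q j (filter (predC1 j) L1) =
          count_mem j L2 * (p ^ j * q ^ (j - j)) + nv p q j (filter (predC1 j) L2))%N.
  by apply/eqP; rewrite -(eqr_nat rat) -(split_nat hL1 (leqnn j)) -(split_nat hL2 (leqnn j)) eL.
rewrite subnn expn0 muln1 in hv.
case: (posnP j) => hj0.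
  have hR : forall L, (forall k, k \in L -> k <= j)%N -> filter (predC1 j) L = [::].
    move=> L hL; rewrite (@eq_in_filter _ _ pred0); first exact: filter_pred0.
    by move=> k /hL hk /=; rewrite hj0; apply/negbTE; rewrite negbK; apply/eqP; lia.
  move: hv; rewrite !hR // /nv !big_nil hj0 expn0; lia.
have [t' ht'] := N_pos hN hs hj hj0.
have hR : forall L, (forall k, k \in L -> k <= j)%N -> inN L ->
    (q ^ dl t' %| nv p q j (filter (predC1 j) L))%N.
  move=> L hL hNL; rewrite ht'; apply: (nv_dvd_high hp0 hq0 cop) => k.
  rewrite mem_filter => /andP [hkj hk].
  apply: (N_below hs (hNL k hk)); rewrite ltn_neqAle; apply/andP; split; first exact: hkj.
  by rewrite -ht' hL.
apply: (@canc (q ^ dl t')%N _ _ _ _ _ _ hv).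
- by rewrite coprimeXr // coprimeXl // coprime_sym.
- exact: hR.
- exact: hR.
- exact: ca1.
- exact: ca2.
Qed.

Lemma pow_le_gt1 j k : (q < p)%N -> (j <= k)%N -> r ^+ j <= r ^+ k.
Proof. by move=> h hjk; apply: ler_weXn2l => //; apply: ltW; apply: r_gt1. Qed.

Lemma pow_le_lt1 j k : (p < q)%N -> (j <= k)%N -> r ^+ k <= r ^+ j.
Proof.
move=> h; rewrite leq_eqVlt => /orP [/eqP ->//|hjk].
exact: ltW (pow_lt1 h hjk).
Qed.

Lemma lowhigh i ks : inN ks -> vl ks = (p ^ dl i)%:R * r ^+ s i ->
  (forall k, k \in ks -> s i.+1 <= k)%N \/ (forall k, k \in ks -> k <= s i)%N.
Proof.
move=> hks e.
pose P := fun k : nat => (k <= s i)%N.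
case: (eqVneq (filter P ks) [::]) => hl.
  left => k hk; case hPk: (P k).
    have : k \in filter P ks by rewrite mem_filter hPk hk.
    by rewrite hl.
  by apply: (N_above hs (hks k hk)); rewrite ltnNge; move: hPk; rewrite /P => ->.
right; suff hh : filter (predC P) ks = [::].
  move=> k hk; case hPk: (P k) => //.
  have : k \in filter (predC P) ks by rewrite mem_filter /= hPk hk.
  by rewrite hh.
apply/eqP; apply/negPn/negP => hh.
have [E hE] := bound_exists (s i.+1 :: ks).
have hiE : (s i.+1 <= E)%N by apply: hE; rewrite mem_head.
have hsi : (s i <= s i.+1)%N by rewrite (s_leE hs).
have hkE : forall k, k \in ks -> (k <= E)%N by move=> k hk; apply: hE; rewrite inE hk orbT.
have hfE : forall (Q : pred nat) k, k \in filter Q ks -> (k <= E)%N.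
  by move=> Q k; rewrite mem_filter => /andP [_ /hkE].
have hx : ((p ^ dl i)%:R * r ^+ s i) * (q ^ E)%:R =
          (p ^ s i.+1 * q ^ (E - s i))%:R :> rat.
  rewrite -mulrA pow_nv; last exact: leq_trans hsi hiE.
  by rewrite -natrM mulnA -expnD subnK.
have hsum : (nv p q E (filter P ks) + nv p q E (filter (predC P) ks) =
             p ^ s i.+1 * q ^ (E - s i))%N.
  apply/eqP; rewrite -(eqr_nat rat) -hx -e (val_split r P ks) mulrDl natrD.
  by rewrite (val_nv hr hq0 (hfE _)) (val_nv hr hq0 (hfE _)).
have dlow : (q ^ (E - s i) %| nv p q E (filter P ks))%N.
  by apply: (nv_dvd_high hp0 hq0 cop) => k; rewrite mem_filter => /andP [].
have dhigh : (p ^ s i.+1 %| nv p q E (filter (predC P) ks))%N.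
  apply: nv_dvd_low => k; rewrite mem_filter => /andP [/= hk hkin].
  by apply: (N_above hs (hks k hkin)); rewrite ltnNge.
have [y hy] := dvdnP dlow.
have hd : (p ^ s i.+1 %| y * q ^ (E - s i))%N.
  rewrite -hy; have -> : nv p q E (filter P ks) =
     (p ^ s i.+1 * q ^ (E - s i) - nv p q E (filter (predC P) ks))%N by lia.
  by apply: dvdn_sub => //; apply: dvdn_mulr.
rewrite Gauss_dvdl in hd; last by rewrite coprimeXl // coprimeXr.
have ypos : (0 < y)%N.
  have := nv_gt0 hp0 hq0 E hl; rewrite hy muln_gt0 => /andP [].
  done.
have hyge := dvdn_leq ypos hd.
have := nv_gt0 hp0 hq0 E hh.
have : (p ^ s i.+1 * q ^ (E - s i) <= y * q ^ (E - s i))%N by rewrite leq_mul2r hyge orbT.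
lia.
Qed.

Lemma gap_len i ks : inN ks -> vl ks = (p ^ dl i)%:R * r ^+ s i ->
  (size ks <= minn (p ^ dl i) (q ^ dl i))%N \/ (maxn (p ^ dl i) (q ^ dl i) <= size ks)%N.
Proof.
move=> hks e.
have hpos : forall k, 0 < r ^+ k by move=> k; rewrite exprn_gt0 // rgt0.
have e2 : vl ks = (q ^ dl i)%:R * r ^+ s i.+1 by rewrite e move_val.
have hlt : (q ^ dl i < p ^ dl i)%N = (q < p)%N by rewrite ltn_exp2r // (delta_pos hs).
have hlt2 : (p ^ dl i < q ^ dl i)%N = (p < q)%N by rewrite ltn_exp2r // (delta_pos hs).
case: (ltngtP p q) => hpq; last by move: p_neq_q; rewrite hpq eqxx.
-
  have hmin : (minn (p ^ dl i) (q ^ dl i) = p ^ dl i)%N by apply/minn_idPl; rewrite ltnW // hlt2.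
  have hmax : (maxn (p ^ dl i) (q ^ dl i) = q ^ dl i)%N by apply/maxn_idPr; rewrite ltnW // hlt2.
  rewrite hmin hmax.
  case: (lowhigh hks e) => hk; [right|left].
  + have := val_le_size (c := r ^+ s i.+1) (r:=r) (ks:=ks).
    rewrite e2 ler_pM2r // ler_nat; apply => k /hk; exact: pow_le_lt1.
  + have := val_ge_size (c := r ^+ s i) (r:=r) (ks:=ks).
    rewrite e ler_pM2r // ler_nat; apply => k /hk; exact: pow_le_lt1.
-
  have hmin : (minn (p ^ dl i) (q ^ dl i) = q ^ dl i)%N by apply/minn_idPr; rewrite ltnW // hlt.
  have hmax : (maxn (p ^ dl i) (q ^ dl i) = p ^ dl i)%N by apply/maxn_idPl; rewrite ltnW // hlt.
  rewrite hmin hmax.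
  case: (lowhigh hks e) => hk; [left|right].
  + have := val_ge_size (c := r ^+ s i.+1) (r:=r) (ks:=ks).
    rewrite e2 ler_pM2r // ler_nat; apply => k /hk; exact: pow_le_gt1.
  + have := val_le_size (c := r ^+ s i) (r:=r) (ks:=ks).
    rewrite e ler_pM2r // ler_nat; apply => k /hk; exact: pow_le_gt1.
Qed.

Lemma part1 i : delta_set M (maxn (p ^ dl i) (q ^ dl i) - minn (p ^ dl i) (q ^ dl i))%N.
Proof.
set x := vl (nseq (p ^ dl i) (s i)).
have hx : x = (p ^ dl i)%:R * r ^+ s i by rewrite /x (val_nseq r).
have Lp : in_lengths M x (p ^ dl i).
  by have := @len_from (nseq (p ^ dl i) (s i)) (inN_nseq (Ns hs i)); rewrite size_nseq.
have Lq : in_lengths M x (q ^ dl i).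
  have -> : x = vl (nseq (q ^ dl i) (s i.+1)) by rewrite hx (val_nseq r) move_val.
  by have := @len_from (nseq (q ^ dl i) (s i.+1)) (inN_nseq (Ns hs i.+1)); rewrite size_nseq.
have hne : (p ^ dl i != q ^ dl i)%N by rewrite eqn_exp2r ?(delta_pos hs) // p_neq_q.
exists x; split; first by apply: in_M; apply: inN_nseq; apply: (Ns hs).
split.
  move: hne; set a := (p ^ dl i)%N; set b := (q ^ dl i)%N => hne.
  have : a <> b by move=> e; rewrite e eqxx in hne.
  lia.
have gapP : forall l', (minn (p ^ dl i) (q ^ dl i) < l')%N ->
    (l' < maxn (p ^ dl i) (q ^ dl i))%N -> ~ in_lengths M x l'.
  move=> l' h1 h2 /len_to [ks [hks [hsz e]]].
  rewrite hx in e; case: (gap_len hks (esym e)); rewrite hsz; lia.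
exists (minn (p ^ dl i) (q ^ dl i)).
have hmm : (minn (p ^ dl i) (q ^ dl i) <= maxn (p ^ dl i) (q ^ dl i))%N by lia.
rewrite subnKC //.
have [h|h] := boolP (p ^ dl i <= q ^ dl i)%N.
  by move: gapP; rewrite (maxn_idPr h) (minn_idPl h).
have h' : (q ^ dl i <= p ^ dl i)%N by lia.
by move: gapP; rewrite (maxn_idPl h') (minn_idPr h').
Qed.

Lemma nv_mod m E ks : (p %% m = q %% m)%N -> (forall k, k \in ks -> k <= E)%N ->
  (nv p q E ks = size ks * q ^ E %[mod m])%N.
Proof.
move=> hm; elim: ks => [|k ks IH] hE; first by rewrite /nv big_nil.
have hkE : (k <= E)%N by apply: hE; rewrite mem_head.
have IH' : (nv p q E ks = size ks * q ^ E %[mod m])%N.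
  by apply: IH => j hj; apply: hE; rewrite inE hj orbT.
have h1 : (p ^ k * q ^ (E - k) = q ^ E %[mod m])%N.
  by rewrite -modnMml -modnXm hm modnXm modnMml -expnD subnKC.
rewrite /nv big_cons -/(nv p q E ks) /= mulSn.
by rewrite -modnDm h1 IH' modnDm.
Qed.

Lemma part2a x D : is_distance M x D ->
  (maxn p q - minn p q <= D)%N.
Proof.
case=> hD [l [hl [hlD _]]].
have [ks1 [h1 [sz1 e1]]] := len_to hl.
have [ks2 [h2 [sz2 e2]]] := len_to hlD.
have [E hE] := bound_exists (ks1 ++ ks2).
have hE1 : forall k, k \in ks1 -> (k <= E)%N by move=> k hk; apply: hE; rewrite mem_cat hk.
have hE2 : forall k, k \in ks2 -> (k <= E)%N by move=> k hk; apply: hE; rewrite mem_cat hk orbT.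
have env : nv p q E ks1 = nv p q E ks2.
  apply/eqP; rewrite -(eqr_nat rat) -(val_nv hr hq0 hE1) -(val_nv hr hq0 hE2) -e1 -e2 //.
set m := (maxn p q - minn p q)%N.
have hm : (p %% m = q %% m)%N.
  have [h|h] := boolP (p <= q)%N.
    have -> : q = (p + m)%N by rewrite /m (maxn_idPr h) (minn_idPl h); lia.
    by rewrite modnDr.
  have -> : p = (q + m)%N by rewrite /m (maxn_idPl _) ?(minn_idPr _); lia.
  by rewrite modnDr.
have cm : coprime m q.
  have [h|h] := boolP (p <= q)%N.
    have em : m = (q - p)%N by rewrite /m (maxn_idPr h) (minn_idPl h).
    rewrite em /coprime -{2}(subnK h) gcdnDl gcdnC -(gcdnDr p (q - p)) (subnK h).
    exact: cop.
  have h' : (q <= p)%N by lia.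
  have em : m = (p - q)%N by rewrite /m (maxn_idPl h') (minn_idPr h').
  rewrite em /coprime gcdnC -(gcdnDr q (p - q)) (subnK h') gcdnC.
  exact: cop.
have hmd := nv_mod hm hE1; have hmd2 := nv_mod hm hE2.
rewrite env hmd2 sz1 sz2 in hmd.
have hdiv : (m %| D * q ^ E)%N.
  have := eqn_mod_dvd m (leq_mul (leq_addr D l) (leqnn (q ^ E))).
  rewrite hmd eqxx => /esym hd.
  by move: hd; rewrite -mulnBl addnC addnK.
rewrite Gauss_dvdl in hdiv; last by rewrite coprimeXr.
exact: dvdn_leq hD hdiv.
Qed.

Lemma part2b x D : is_distance M x D ->
  (D <= maxn (p ^ s 1%N) (q ^ s 1%N) - minn (p ^ s 1%N) (q ^ s 1%N))%N.
Proof.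
case=> hD [l [hl [hlD hgap]]].
rewrite leqNgt; apply/negP => hbig.
have [ks [hks [sz e]]] := len_to hlD.
have [ks' [hks' [sz' e']]] := len_to hl.
have hd := delta_le hN hs.
case: (ltngtP p q) => hpq; last by move: p_neq_q; rewrite hpq eqxx.
-
  have hmx : forall a, maxn (p ^ a) (q ^ a) = (q ^ a)%N.
    by move=> a; apply/maxn_idPr; apply: exp_mono; apply: ltnW.
  have hmn : forall a, minn (p ^ a) (q ^ a) = (p ^ a)%N.
    by move=> a; apply/minn_idPl; apply: exp_mono; apply: ltnW.
  rewrite hmx hmn in hbig.
  have hc : canon2 ks.
    apply: NNPP => hc; have [i hi] := not_all_ex_not _ _ hc.
    have hi' : (q ^ dl i <= count_mem (s i.+1) ks)%N by rewrite leqNgt; apply/negP.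
    have [ks2 [h2 [e2 sz2]]] := move_up hks hi'.
    have hm := diff_mono (ltnW hpq) (hd i).
    have hlt : (p ^ dl i < q ^ dl i)%N by rewrite ltn_exp2r ?(delta_pos hs).
    apply: (hgap (size ks2)).
    + lia.
    + lia.
    + by rewrite e -e2; apply: len_from.
  have [ks'' [h'' [e'' [sz'' c'']]]] := reduce2 hpq hks'.
  have eq3 : vl ks = vl ks'' by rewrite -e e' e''.
  have := unique2 hpq hks h'' hc c'' eq3.
  lia.
-
  have hmx : forall a, maxn (p ^ a) (q ^ a) = (p ^ a)%N.
    by move=> a; apply/maxn_idPl; apply: exp_mono; apply: ltnW.
  have hmn : forall a, minn (p ^ a) (q ^ a) = (q ^ a)%N.
    by move=> a; apply/minn_idPr; apply: exp_mono; apply: ltnW.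
  rewrite hmx hmn in hbig.
  have hc : canon1 ks.
    apply: NNPP => hc; have [i hi] := not_all_ex_not _ _ hc.
    have hi' : (p ^ dl i <= count_mem (s i) ks)%N by rewrite leqNgt; apply/negP.
    have [ks2 [h2 [e2 sz2]]] := move_down hks hi'.
    have hm := diff_mono (ltnW hpq) (hd i).
    have hlt : (q ^ dl i < p ^ dl i)%N by rewrite ltn_exp2r ?(delta_pos hs).
    apply: (hgap (size ks2)).
    + lia.
    + lia.
    + by rewrite e -e2; apply: len_from.
  have [ks'' [h'' [e'' [sz'' c'']]]] := reduce1 hpq hks'.
  have eq3 : vl ks = vl ks'' by rewrite -e e' e''.
  have := unique1 hpq hks h'' hc c'' eq3.
  lia.
Qed.

End Main.

Lemma atom_inv0 (N : nat -> Prop) (r : rat) (p q : nat) :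
  r = p%:R / q%:R -> (0 < p)%N -> (0 < q)%N ->
  forall a, is_atom (exp_puiseux r N) a -> exists k, N k /\ a = r ^+ k.
Proof.
move=> hr hp0 hq0 a.
case=> [[ks [hks ->]] [hne hsp]].
case: ks hks hne hsp => [|k ks] hks hne hsp; first by rewrite big_nil eqxx in hne.
have hk : N k by apply: hks; rewrite inE eqxx.
case: (eqVneq ks [::]) => [->|nks].
  by exists k; split => //; rewrite big_cons big_nil addr0.
exfalso.
have hks' : forall j, j \in ks -> N j by move=> j hj; apply: hks; rewrite inE hj orbT.
have hu : exp_puiseux r N (r ^+ k).
  by exists [:: k]; split; [move=> j; rewrite inE => /eqP -> | rewrite big_cons big_nil addr0].
have hv : exp_puiseux r N (vsum r ks) by exists ks.
have he : \sum_(k0 <- k :: ks) r ^+ k0 = r ^+ k + vsum r ks by rewrite big_cons.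
case: (hsp _ _ hu hv he) => /eqP.
  by apply/negP; rewrite expf_neq0 // lt0r_neq0 // (r_gt0 hr hp0 hq0).
by apply/negP; rewrite lt0r_neq0 // (val_gt0 hr hp0 hq0).
Qed.

Lemma not_atomic1 (N : nat -> Prop) (r : rat) (q : nat) :
  numerical_monoid N -> r = 1%:R / q%:R -> (1 < q)%N ->
  atomic (exp_puiseux r N) -> False.
Proof.
move=> [N0 [Nadd [b hb]]] hr hq hat.
have hq0 : (0 < q)%N by apply: ltnW.
have hp0 : (0 < 1)%N by [].
have M1 : exp_puiseux r N 1.
  by exists [:: 0%N]; split; [move=> j; rewrite inE => /eqP -> | rewrite big_cons big_nil addr0 expr0].
have [sa [hsa e]] := hat 1 M1 (oner_neq0 _).
case: sa hsa e => [|a sa] hsa e; first by move/eqP: e; rewrite big_nil oner_eq0.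
have ha := hsa a (mem_head _ _).
have [k [hk ek]] := atom_inv0 hr hp0 hq0 ha.
case: ha => _ [_ hsp].
set t := b.+1.
have hK : N (k + t)%N by apply: hb; rewrite /t; lia.
have hqt : (1 < q ^ t)%N by rewrite /t (leq_trans hq) // -{1}(expn1 q) leq_exp2l.
have hu : exp_puiseux r N (r ^+ (k + t)).
  by exists [:: (k + t)%N]; split; [move=> j; rewrite inE => /eqP -> | rewrite big_cons big_nil addr0].
have hv : exp_puiseux r N (vsum r (nseq (q ^ t - 1) (k + t))).
  by exists (nseq (q ^ t - 1) (k + t)); split => // j /nseqP [-> _].
have esum : a = r ^+ (k + t) + vsum r (nseq (q ^ t - 1) (k + t)).
  rewrite (val_nseq r) ek exprD.
  have ht : r ^+ t = 1 / (q ^ t)%:R by rewrite (rpowE hr) exp1n.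
  rewrite ht natrB; last by apply: ltnW.
  have hqn : (q ^ t)%:R != 0 :> rat by rewrite pnatr_eq0 -lt0n expn_gt0 hq0.
  by field.
case: (hsp _ _ hu hv esum) => /eqP.
  by apply/negP; rewrite expf_neq0 // lt0r_neq0 // (r_gt0 hr hp0 hq0).
apply/negP; rewrite lt0r_neq0 // (val_gt0 hr hp0 hq0) //.
by rewrite -size_eq0 size_nseq; lia.
Qed.

Lemma PoszX (p d : nat) : (Posz p) ^+ d = Posz (p ^ d).
Proof. elim: d => [|d IH]; first by []. by rewrite exprS IH expnS PoszM. Qed.

Lemma distn_mm (a b : nat) : `|(Posz a) - (Posz b)|%N = (maxn a b - minn a b)%N.
Proof.
have [h|h] := boolP (a <= b)%N.
  by rewrite distnEr // (maxn_idPr h) (minn_idPl h).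
have h' : (b <= a)%N by lia.
by rewrite distnEl // (maxn_idPl h') (minn_idPr h').
Qed.

Unset Implicit Arguments. Set Strict Implicit.

Theorem mainTheorem9 (r : rat) (N : nat -> Prop) (s : nat -> nat) :
  numerical_monoid N -> enumerates N s ->
  0 < r ->
  (forall m : nat, r != m%:R) ->          (* nontrivial: r not in N *)
  atomic (exp_puiseux r N) ->
  (forall n : nat,
     delta_set (exp_puiseux r N)
       `|numq r ^+ (s n.+1 - s n) - denq r ^+ (s n.+1 - s n)|%N) /\
  (forall d : nat, delta_set (exp_puiseux r N) d ->
     (`|numq r - denq r|%N <= d)%N /\
     (d <= `|numq r ^+ (s 1%N - s 0%N) - denq r ^+ (s 1%N - s 0%N)|%N)%N).
Proof.
move=> hN hs hr0 hnat hat.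
set p := `|numq r|%N; set q := `|denq r|%N.
have hnq : numq r = Posz p by rewrite /p abszE gtr0_norm // numq_gt0.
have hdq : denq r = Posz q by rewrite /q abszE gtr0_norm // denq_gt0.
have hr : r = p%:R / q%:R by rewrite -[r in LHS]divq_num_den hnq hdq.
have cop : coprime p q by apply: coprime_num_den.
have hq0 : (0 < q)%N by have := denq_gt0 r; rewrite hdq.
have hp0 : (0 < p)%N by have := hr0; rewrite -numq_gt0 hnq.
have hq : (1 < q)%N.
  rewrite ltn_neqAle hq0 andbT; apply/negP => /eqP hq1.
  by move: (hnat p); rewrite hr -hq1 divr1 eqxx.
have hp : (1 < p)%N.
  rewrite ltn_neqAle hp0 andbT; apply/negP => /eqP hp1.
  by apply: (not_atomic1 hN _ hq hat); rewrite hr -hp1.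
split.
  move=> n; rewrite hnq hdq !PoszX distn_mm.
  exact: (part1 hs hr hp hq cop n).
move=> D [x [hx hdist]]; split.
  rewrite hnq hdq distn_mm; exact: (part2a hr hp hq cop hdist).
rewrite hnq hdq !PoszX distn_mm (s0 hN hs) subn0.
exact: (part2b hN hs hr hp hq cop hdist).
Qed.
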